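(* Let $S$ be a numerical semigroup of multiplicity $m$. Then the set of binomials $$\{\,x_ix_j-y^{c_{i,j}}x_{i+j} : 1\le i\le j\le m-1\,\}$$ generates the Apéry toric ideal $J_S$ and is a Gröbner basis of $J_S$ with respect to any term order $\preceq$ on $R$ such that $\mathbf x^{\mathbf a}y^r\succ \mathbf x^{\mathbf b}y^s$ whenever $a_1+\cdots+a_{m-1}>b_1+\cdots+b_{m-1}$ (where $\mathbf x^{\mathbf a},\mathbf x^{\mathbf b}$ are monomials in $x_1,\dots,x_{m-1}$). Moreover, the initial ideal of $J_S$ under such an order is $\langle x_ix_j: 1\le i,j\le m-1\rangle$.
   Context: A numerical semigroup is a submonoid $S\subseteq(\mathbb Z_{\ge0},+)$ containing $0$ with finite complement; its multiplicity is $m=\min(S\setminus\{0\})\ge2$. The Apéry set is $\{n\in S: n-m\notin S\}=\{0,a_1,\dots,a_{m-1}\}$ with $a_i\equiv i\pmod m$; set $a_0=m$. Subscripts are read modulo $m$ with representatives in $\{0,\dots,m-1\}$. Let $R=\Bbbk[x_0,x_1,\dots,x_{m-1}]$ over a field $\Bbbk$, graded by $\deg x_i=a_i$, and write $y=x_0$ (so $x_{i+j}=y$ when $i+j\equiv0$). The Apéry toric ideal is $J_S=\ker(\varphi)$ where $\varphi:R\to\Bbbk[t]$, $x_i\mapsto t^{a_i}$. For $1\le i,j\le m-1$, $c_{i,j}=\frac1m(a_i+a_j-a_{i+j})\ge0$. *)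

(* Defs.v *)
From HB Require Import structures.
From mathcomp Require Import all_boot all_order all_algebra.
From mathcomp Require Import mpoly.
Set Implicit Arguments. Unset Strict Implicit. Unset Printing Implicit Defensive.
Import Order.TTheory GRing.Theory.
Local Open Scope ring_scope.

Definition numerical_semigroup (S : pred nat) : Prop :=
  [/\ S 0%N,
      (forall x y, S x -> S y -> S (x + y)%N)
    & exists N : nat, forall n, (N <= n)%N -> S n].

Definition multiplicity (S : pred nat) (m : nat) : Prop :=
  [/\ (0 < m)%N, S m & forall k, (0 < k < m)%N -> ~~ S k].

(* a : 'I_m -> nat lists the Apery set: a_0 = m and, for 1 <= i <= m-1,
   a_i is the element of Ap(S,m) = {n in S : n - m notin S} with
   a_i = i (mod m).  ("n - m notin S" is automatic when n < m.) *)
Definition apery_data (S : pred nat) (m : nat) (a : 'I_m -> nat) : Prop :=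
  forall i : 'I_m,
    if i == 0 :> nat then a i = m
    else [/\ S (a i), (a i %% m)%N = i & (m <= a i)%N -> ~~ S (a i - m)%N].

Lemma ord_pos m (i : 'I_m) : (0 < m)%N.
Proof. exact: leq_ltn_trans (leq0n i) (ltn_ord i). Qed.

Definition ordmod m (i : 'I_m) (k : nat) : 'I_m :=
  Ordinal (ltn_pmod k (ord_pos i)).

Definition oadd m (i j : 'I_m) : 'I_m := ordmod i (i + j).

Definition cij m (a : 'I_m -> nat) (i j : 'I_m) : nat :=
  ((a i + a j - a (oadd i j)) %/ m)%N.

(* J_S = ker (x_i |-> t^{a_i}), where a_0 = m. *)
Definition apery_toric_ideal (K : fieldType) m (a : 'I_m -> nat)
  (p : {mpoly K[m]}) : Prop :=
  mmap (@polyC K) (fun i : 'I_m => ('X ^+ a i : {poly K})) p = 0.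

Definition in_ideal (K : fieldType) m (G : {mpoly K[m]} -> Prop)
  (p : {mpoly K[m]}) : Prop :=
  exists (n : nat) (r g : 'I_n -> {mpoly K[m]}),
    (forall k, G (g k)) /\ p = \sum_(k < n) r k * g k.

Definition term_order m (le : rel 'X_{1..m}) : Prop :=
  [/\ reflexive le, antisymmetric le, transitive le & total le] /\
  (forall u v w, le u v -> le (u + w)%MM (v + w)%MM) /\
  (forall u, le 0%MM u).

Definition is_lead_monom (K : fieldType) m (le : rel 'X_{1..m})
  (p : {mpoly K[m]}) (u : 'X_{1..m}) : Prop :=
  u \in msupp p /\ forall v, v \in msupp p -> le v u.

Definition lead_monoms (K : fieldType) m (le : rel 'X_{1..m})
  (F : {mpoly K[m]} -> Prop) (q : {mpoly K[m]}) : Prop :=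
  exists f u, [/\ F f, f != 0, is_lead_monom le f u & q = 'X_[u]].

Definition initial_ideal (K : fieldType) m (le : rel 'X_{1..m})
  (J : {mpoly K[m]} -> Prop) : {mpoly K[m]} -> Prop :=
  in_ideal (lead_monoms le J).

Definition groebner_basis (K : fieldType) m (le : rel 'X_{1..m})
  (G J : {mpoly K[m]} -> Prop) : Prop :=
  (forall g, G g -> J g) /\
  (forall p, initial_ideal le J p <-> in_ideal (lead_monoms le G) p).

Definition same_ideal (K : fieldType) m (I1 I2 : {mpoly K[m]} -> Prop) : Prop :=
  forall p, I1 p <-> I2 p.

(* sum of the exponents of x_1, ..., x_{m-1} (excluding y = x_0) *)
Definition xdeg m (u : 'X_{1..m}) : nat := (\sum_(i < m | i != 0 :> nat) u i)%N.

Definition apery_binomials (K : fieldType) m (a : 'I_m -> nat)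
  (q : {mpoly K[m]}) : Prop :=
  exists i j : 'I_m, [/\ (0 < i)%N, (i <= j)%N &
    q = 'X_i * 'X_j - 'X_(ordmod i 0) ^+ cij a i j * 'X_(oadd i j)].

Definition quad_monoms (K : fieldType) m (q : {mpoly K[m]}) : Prop :=
  exists i j : 'I_m, [/\ (0 < i)%N, (0 < j)%N & q = 'X_i * 'X_j].

(* Main.v *)
Require Import Defs.
From HB Require Import structures.
From mathcomp Require Import all_boot all_order all_algebra.
From mathcomp Require Import mpoly zify ring.
Import Order.TTheory GRing.Theory.
Local Open Scope ring_scope.
Set Implicit Arguments. Unset Strict Implicit.

Lemma ii0 (K : fieldType) m (G : {mpoly K[m]} -> Prop) : in_ideal G 0.
Proof. exists 0%N, (fun=> 0), (fun=> 0); split; [by case | by rewrite big_ord0]. Qed.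

Lemma iigen (K : fieldType) m (G : {mpoly K[m]} -> Prop) g : G g -> in_ideal G g.
Proof. by move=> Gg; exists 1%N, (fun=> 1), (fun=> g); split=> //; rewrite big_ord1 mul1r. Qed.

Lemma iiD (K : fieldType) m (G : {mpoly K[m]} -> Prop) p q :
  in_ideal G p -> in_ideal G q -> in_ideal G (p + q).
Proof.
case=> [n1 [r1 [g1 [G1 ->]]]] [n2 [r2 [g2 [G2 ->]]]].
exists (n1 + n2)%N, (fun k => match split k with inl i => r1 i | inr j => r2 j end),
  (fun k => match split k with inl i => g1 i | inr j => g2 j end); split.
  by move=> k; case: (split k).
rewrite big_split_ord /=; congr (_ + _); apply: eq_bigr => i _.
  by rewrite (unsplitK (inl _ i)).
by rewrite (unsplitK (inr _ i)).
Qed.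

Lemma iiM (K : fieldType) m (G : {mpoly K[m]} -> Prop) r p :
  in_ideal G p -> in_ideal G (r * p).
Proof.
case=> [n [r1 [g1 [G1 ->]]]]; exists n, (fun k => r * r1 k), g1; split=> //.
by rewrite mulr_sumr; apply: eq_bigr => i _; rewrite mulrA.
Qed.

Lemma iiB (K : fieldType) m (G : {mpoly K[m]} -> Prop) p q :
  in_ideal G p -> in_ideal G q -> in_ideal G (p - q).
Proof. by move=> hp hq; apply: iiD => //; rewrite -mulN1r; apply: iiM. Qed.

Lemma iisub (K : fieldType) m (G H : {mpoly K[m]} -> Prop) p :
  (forall g, G g -> in_ideal H g) -> in_ideal G p -> in_ideal H p.
Proof.
move=> GH [n [r [g [Gg ->]]]].
elim/big_ind: _ => [|x y|i _]; [exact: ii0 | exact: iiD | ].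
by apply: iiM; apply: GH.
Qed.

Lemma iimono (K : fieldType) m (G H : {mpoly K[m]} -> Prop) p :
  (forall g, G g -> H g) -> in_ideal G p -> in_ideal H p.
Proof. by move=> GH; apply: iisub => g /GH; apply: iigen. Qed.

Lemma iiJ (K : fieldType) m (a : 'I_m -> nat) (G : {mpoly K[m]} -> Prop) p :
  (forall g, G g -> apery_toric_ideal a g) -> in_ideal G p -> apery_toric_ideal a p.
Proof.
move=> GJ [n [r [g [Gg ->]]]]; rewrite /apery_toric_ideal rmorph_sum.
apply: big1 => i _; rewrite rmorphM; have := GJ _ (Gg i); rewrite /apery_toric_ideal => h; apply/eqP; rewrite mulf_eq0; apply/orP; right; apply/eqP; exact: h. Qed.

Definition degA {m} (a : 'I_m -> nat) (u : 'X_{1..m}) := (\sum_i a i * u i)%N.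

Lemma mmap1_deg (K : fieldType) m (a : 'I_m -> nat) (u : 'X_{1..m}) :
  mmap1 (fun i : 'I_m => ('X ^+ a i : {poly K})) u = 'X^(degA a u).
Proof. rewrite /mmap1 /degA; elim/big_rec2: _ => [|i y1 y2 _ ->]; first by rewrite expr0.
by rewrite -exprM exprD. Qed.

Lemma degAD m (a : 'I_m -> nat) u v : degA a (u + v)%MM = (degA a u + degA a v)%N.
Proof. by rewrite /degA -big_split; apply: eq_bigr => i _; rewrite mnmDE mulnDr. Qed.

Lemma degAU m (a : 'I_m -> nat) k : degA a U_(k)%MM = a k.
Proof.
rewrite /degA (bigD1 k) //= mnm1E eqxx muln1 big1 ?addn0 // => i ik.
by rewrite mnm1E eq_sym (negbTE ik) muln0.
Qed.

Lemma degAMn m (a : 'I_m -> nat) u r : degA a (u *+ r)%MM = (degA a u * r)%N.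
Proof. by rewrite /degA big_distrl; apply: eq_bigr => i _; rewrite mulmnE mulnA. Qed.

Lemma xdegD m (u v : 'X_{1..m}) : xdeg (u + v)%MM = (xdeg u + xdeg v)%N.
Proof. by rewrite /xdeg -big_split; apply: eq_bigr => i _; rewrite mnmDE. Qed.

Lemma xdegU m (k : 'I_m) : xdeg U_(k)%MM = (k != 0 :> nat).
Proof.
rewrite /xdeg; case: eqP => [k0|/eqP k0].
  by apply: big1 => i i0; rewrite mnm1E; case: eqP => // ki; rewrite -ki k0 in i0.
rewrite (bigD1 k) //= mnm1E eqxx big1 ?addn0 // => i /andP[_ ik].
by rewrite mnm1E eq_sym (negbTE ik).
Qed.

Lemma xdegMn0 m (y : 'I_m) r : val y = 0%N -> xdeg (U_(y) *+ r)%MM = 0%N.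
Proof.
move=> y0; rewrite /xdeg big1 // => i i0; rewrite mulmnE mnm1E.
by case: eqP => // yi; rewrite -yi y0 in i0.
Qed.

Lemma apery_mod (S : pred nat) m (a : 'I_m -> nat) :
  apery_data S a -> forall k : 'I_m, (a k %% m)%N = k.
Proof. move=> ap k; have := ap k; case: eqP => [k0 ->|_ [_ h _] //]; by rewrite modnn k0. Qed.

Lemma apery_ge (S : pred nat) m (a : 'I_m -> nat) :
  multiplicity S m -> apery_data S a -> forall k : 'I_m, val k != 0%N ->
  (m <= a k)%N /\ S (a k).
Proof.
move=> [m0 Sm mS] ap k k0; have := ap k; rewrite (negbTE k0) => -[Sak amod _]; split=> //.
rewrite leqNgt; apply/negP => lt.
have ak0 : (0 < a k)%N.
  by rewrite lt0n; apply/eqP => a0; move: k0; rewrite /= -amod a0 mod0n.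
by move: (mS (a k)); rewrite ak0 lt Sak => /(_ isT).
Qed.

Lemma S_mul (S : pred nat) m : numerical_semigroup S -> S m -> forall t, S (t * m)%N.
Proof. case=> S0 Sadd _ Sm; elim=> [|t IH]; first by rewrite mul0n. by rewrite mulSn; apply: Sadd. Qed.

Lemma key_id (S : pred nat) m (a : 'I_m -> nat) :
  numerical_semigroup S -> multiplicity S m -> apery_data S a ->
  forall i j : 'I_m, val i != 0%N -> val j != 0%N ->
  (a i + a j = cij a i j * m + a (oadd i j))%N.
Proof.
move=> ns mu ap i j i0 j0; have [m0 Sm _] := mu; have [S0 Sadd _] := ns.
set k := oadd i j; set s := (a i + a j)%N.
have [mi Si] := apery_ge mu ap i0; have [mj Sj] := apery_ge mu ap j0.
have smod : (s %% m = k)%N.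
  by rewrite /s -modnDm !(apery_mod ap) /k /oadd /ordmod.
have akmod := apery_mod ap k.
have le : (a k <= s)%N.
  have := ap k; case: eqP => [_ ->|k0 [Sak _ hk]]; first by rewrite /s; lia.
  rewrite leqNgt; apply/negP => lt.
  have dv : (m %| a k - s)%N by rewrite -eqn_mod_dvd ?(ltnW lt) // akmod smod.
  have [t ht] := dvdnP dv.
  have t0 : (0 < t)%N by case: t ht => [|t] //; rewrite mul0n => /eqP; rewrite subn_eq0 leqNgt lt.
  have mk : (m <= a k)%N by move: ht; case: t t0 => // t _; rewrite mulSn; lia.
  move/negP: (hk mk); apply.
  have -> : (a k - m = s + t.-1 * m)%N.
    by move: ht; case: t t0 => // t _; rewrite mulSn /=; lia.
  by apply: (Sadd); [apply: (Sadd) | apply: (S_mul ns Sm)].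
have dv : (m %| s - a k)%N by rewrite -eqn_mod_dvd // akmod smod.
rewrite /cij -/k -/s divnK //; lia.
Qed.

Lemma bin_J (K : fieldType) (S : pred nat) m (a : 'I_m -> nat) (y : 'I_m) :
  numerical_semigroup S -> multiplicity S m -> apery_data S a -> val y = 0%N ->
  forall i j : 'I_m, val i != 0%N -> val j != 0%N ->
  apery_toric_ideal a ('X_i * 'X_j - 'X_y ^+ cij a i j * 'X_(oadd i j) : {mpoly K[m]}).
Proof.
move=> ns mu ap y0 i j i0 j0.
have ay : a y = m by have := ap y; rewrite y0 eqxx.
rewrite /apery_toric_ideal rmorphB !rmorphM rmorphXn /= !mmapX !mmap1U ay.
by rewrite -!exprM -!exprD (key_id ns mu ap i0 j0) mulnC subrr.
Qed.

Lemma xdeg_ge1 m (w : 'X_{1..m}) (i : 'I_m) : val i != 0%N -> (w i <= xdeg w)%N.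
Proof. by move=> i0; rewrite /xdeg (bigD1 i) //= leq_addr. Qed.

Lemma xdeg_ge2 m (w : 'X_{1..m}) (i k : 'I_m) : val i != 0%N -> val k != 0%N -> i != k ->
  (w i + w k <= xdeg w)%N.
Proof.
move=> i0 k0 ik; rewrite /xdeg (bigD1 i) //= (bigD1 k) /=; last by rewrite k0 eq_sym.
by rewrite addnA leq_addr.
Qed.

Lemma xdeg0 m : xdeg (0 : 'X_{1..m})%MM = 0%N.
Proof. by rewrite /xdeg big1 // => i _; rewrite mnm0E. Qed.

Lemma std_shape m (y : 'I_m) (w : 'X_{1..m}) : val y = 0%N -> (xdeg w <= 1)%N ->
  (w = U_(y) *+ w y)%MM \/ exists2 k : 'I_m, val k != 0%N & w = (U_(y) *+ w y + U_(k))%MM.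
Proof.
move=> y0 h.
have iy i : val i = 0%N -> i = y by move=> i0; apply: val_inj; rewrite /= i0 y0.
case: (boolP [exists k : 'I_m, (val k != 0%N) && (0 < w k)%N]).
  case/existsP => k /andP[k0 wk]; right; exists k => //.
  have wk1 : w k = 1%N by have := xdeg_ge1 w k0; lia.
  apply/mnmP => i; rewrite mnmDE mulmnE !mnm1E.
  have [i0|i0] := eqVneq (val i) 0%N.
    rewrite (iy _ i0) eqxx mul1n; case: eqP => [ky|_]; last by rewrite addn0.
    by move: k0; rewrite ky y0.
  case: eqP => [yi|_]; first by move: i0; rewrite -yi y0.
  rewrite mul0n add0n.
  case: (eqVneq k i) => [<-|ki]; first by rewrite wk1.
  have := xdeg_ge2 w i0 k0; rewrite eq_sym ki => /(_ isT); lia.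
move/existsPn => h0; left; apply/mnmP => i; rewrite mulmnE mnm1E.
have [i0|i0] := eqVneq (val i) 0%N; first by rewrite (iy _ i0) eqxx mul1n.
case: eqP => [yi|_]; first by move: i0; rewrite -yi y0.
rewrite mul0n.
by have := h0 i; rewrite i0 /= lt0n negbK => /eqP.
Qed.

Lemma degA_shape1 (S : pred nat) m (a : 'I_m -> nat) (y : 'I_m) r :
  apery_data S a -> val y = 0%N -> degA a (U_(y) *+ r)%MM = (m * r)%N.
Proof. move=> ap y0; rewrite degAMn degAU. by have := ap y; rewrite y0 eqxx => ->. Qed.

Lemma std_inj (S : pred nat) m (a : 'I_m -> nat) (y : 'I_m) (v w : 'X_{1..m}) :
  multiplicity S m -> apery_data S a -> val y = 0%N ->
  (xdeg v <= 1)%N -> (xdeg w <= 1)%N -> degA a v = degA a w -> v = w.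
Proof.
move=> [m0 _ _] ap y0 hv hw.
have amod := apery_mod ap.
have mr r : ((m * r) %% m = 0)%N by rewrite mulnC modnMl.
have mrk r (k : 'I_m) : ((m * r + a k) %% m = k)%N.
  by rewrite -modnDm mr add0n modn_mod amod.
case: (std_shape y0 hv) => [ev|[k k0 ev]]; case: (std_shape y0 hw) => [ew|[l l0 ew]];
  rewrite ev ew ?degAD !(degA_shape1 _ ap y0) ?degAU.
- by move/(congr1 (divn^~ m)); rewrite !mulKn // => ->.
- by move/(congr1 (modn^~ m)); rewrite mr mrk => /esym/eqP; rewrite (negbTE l0).
- by move/(congr1 (modn^~ m)); rewrite mr mrk => /eqP; rewrite (negbTE k0).
- move=> e; have kl : k = l by apply: val_inj; rewrite /= -(mrk (v y) k) e mrk.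
  move: e; rewrite kl => /addIn /(congr1 (divn^~ m)); rewrite !mulKn // => ->.
  by [].
Qed.

Lemma std_zero (K : fieldType) (S : pred nat) m (a : 'I_m -> nat) (y : 'I_m) (q : {mpoly K[m]}) :
  multiplicity S m -> apery_data S a -> val y = 0%N ->
  (forall v, (1 < xdeg v)%N -> q@_v = 0) -> apery_toric_ideal a q -> q = 0.
Proof.
move=> mu ap y0 hs hJ; apply/mpolyP => v; rewrite mcoeff0.
case: (boolP (v \in msupp q)) => [vin|/memN_msupp_eq0 //].
have stdin u : u \in msupp q -> (xdeg u <= 1)%N.
  move=> uin; rewrite leqNgt; apply/negP => /hs qu.
  by move: uin; rewrite mcoeff_msupp qu eqxx.
move: hJ; rewrite /apery_toric_ideal /mmap => hJ.
have := congr1 (fun p : {poly K} => p`_(degA a v)) hJ; rewrite /=.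
rewrite coef0 coef_sum (bigD1_seq v) ?msupp_uniq //= mmap1_deg coefCM coefXn eqxx mulr1.
rewrite big1_seq ?addr0 // => u /andP[uv uin].
rewrite mmap1_deg coefCM coefXn; case: eqP => [e|]; last by rewrite mulr0.
by move: uv; rewrite (std_inj mu ap y0 (stdin _ vin) (stdin _ uin) e) eqxx.
Qed.

Lemma bin_in (K : fieldType) m (a : 'I_m -> nat) (y : 'I_m) :
  val y = 0%N -> forall i j : 'I_m, val i != 0%N -> val j != 0%N ->
  in_ideal (@apery_binomials K m a)
    ('X_i * 'X_j - 'X_y ^+ cij a i j * 'X_(oadd i j)).
Proof.
move=> y0 i j i0 j0.
have oy k : ordmod k 0 = y by apply: val_inj; rewrite /= mod0n y0.
case: (leqP i j) => ij.
  by apply: iigen; exists i, j; split; rewrite ?lt0n ?oy.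
have e1 : oadd i j = oadd j i by apply: val_inj; rewrite /= addnC.
have e2 : cij a i j = cij a j i by rewrite /cij e1 addnC.
rewrite e1 e2 mulrC; apply: iigen; exists j, i; split; rewrite ?lt0n ?oy //.
exact: ltnW.
Qed.

Lemma reduce (K : fieldType) m (a : 'I_m -> nat) (y : 'I_m) :
  val y = 0%N -> forall n (u : 'X_{1..m}), mdeg u = n ->
  exists w, (xdeg w <= 1)%N /\ in_ideal (@apery_binomials K m a) ('X_[u] - 'X_[w]).
Proof.
move=> y0; elim=> [|n IH] u hu.
  move/eqP: hu; rewrite mdeg_eq0 => /eqP ->; exists 0%MM; split; first by rewrite xdeg0.
  by rewrite subrr; apply: ii0.
have [i ui] : exists i, (0 < u i)%N.
  case: (boolP [exists i, (0 < u i)%N]) => [/existsP //|/existsPn h]; exfalso.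
  have u0 : u = 0%MM by apply/mnmP => k; have := h k; rewrite lt0n negbK mnm0E => /eqP.
  by move: hu; rewrite u0 mdeg0.
set u' := (u - U_(i))%MM.
have hle : (U_(i) <= u)%MM by apply/mnm_lepP => k; rewrite mnm1E; case: eqP => // <-.
have hu' : u = (u' + U_(i))%MM by rewrite submK.
have : mdeg u' = n by move: hu; rewrite hu' mdegD mdeg1 addn1 => -[].
case/IH => w' [hw' hI'].
suff [w [hw hI]] : exists w, (xdeg w <= 1)%N /\
   in_ideal (@apery_binomials K m a) ('X_[w' + U_(i)] - 'X_[w]).
  exists w; split => //.
  have -> : 'X_[u] - 'X_[w] = ('X_[u'] - 'X_[w']) * 'X_i + ('X_[w' + U_(i)] - 'X_[w]) :> {mpoly K[m]}.
    by rewrite {1}hu' !mpolyXD; ring.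
  by apply: iiD => //; rewrite mulrC; apply: iiM.
have [i0|i0] := eqVneq (val i) 0%N.
  exists (w' + U_(i))%MM; split; last by rewrite subrr; apply: ii0.
  by rewrite xdegD xdegU i0 addn0.
case: (std_shape y0 hw') => [ew|[k k0 ew]].
  exists (w' + U_(i))%MM; split; last by rewrite subrr; apply: ii0.
  by rewrite xdegD xdegU ew xdegMn0 // add0n leq_b1.
exists (U_(y) *+ w' y + (U_(y) *+ cij a k i + U_(oadd k i)))%MM; split.
  by rewrite !xdegD !xdegMn0 // xdegU; case: (_ != _).
have -> : 'X_[w' + U_(i)] - 'X_[U_(y) *+ w' y + (U_(y) *+ cij a k i + U_(oadd k i))] =
   'X_[U_(y) *+ w' y] * ('X_k * 'X_i - 'X_y ^+ cij a k i * 'X_(oadd k i)) :> {mpoly K[m]}.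
  by rewrite {1}ew !mpolyXD -!mpolyXn; ring.
by apply: iiM; apply: bin_in.
Qed.

Lemma lead_bin (K : fieldType) m (le : rel 'X_{1..m}) (y i j o : 'I_m) c :
  val y = 0%N -> val i != 0%N -> val j != 0%N -> reflexive le ->
  (forall u v : 'X_{1..m}, (xdeg v < xdeg u)%N -> le v u && (u != v)) ->
  is_lead_monom le ('X_i * 'X_j - 'X_y ^+ c * 'X_o : {mpoly K[m]}) (U_(i) + U_(j))%MM.
Proof.
move=> y0 i0 j0 refl hle.
set u := (U_(i) + U_(j))%MM; set w := (U_(y) *+ c + U_(o))%MM.
have -> : ('X_i * 'X_j - 'X_y ^+ c * 'X_o : {mpoly K[m]}) = 'X_[u] - 'X_[w].
  by rewrite !mpolyXD mpolyXn.
have xu : xdeg u = 2%N by rewrite xdegD !xdegU i0 j0.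
have xw : (xdeg w <= 1)%N by rewrite xdegD xdegMn0 // xdegU add0n leq_b1.
have wu : (xdeg w < xdeg u)%N by rewrite xu.
have uw : (w == u) = false by apply/negbTE/eqP => e; move: wu; rewrite e ltnn.
split.
  by rewrite mcoeff_msupp mcoeffB !mcoeffX eqxx uw subr0 oner_neq0.
move=> v; rewrite mcoeff_msupp mcoeffB !mcoeffX.
case: (eqVneq u v) => [<- _|uv]; first exact: refl.
case: (eqVneq w v) => [<- _|wv]; first by case/andP: (hle _ _ wu).
by rewrite subrr eqxx.
Qed.

Lemma pick_nz m (u : 'X_{1..m}) : (0 < xdeg u)%N -> exists k : 'I_m, val k != 0%N /\ (0 < u k)%N.
Proof.
move=> h; case: (boolP [exists k : 'I_m, (val k != 0%N) && (0 < u k)%N]).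
  by case/existsP => k /andP[k0 uk]; exists k.
move/existsPn => h0; exfalso; move: h; rewrite /xdeg big1 // => k k0.
by have := h0 k; rewrite k0 /= lt0n negbK => /eqP.
Qed.

Lemma split_U m (u : 'X_{1..m}) (k : 'I_m) : (0 < u k)%N -> u = ((u - U_(k)) + U_(k))%MM.
Proof.
move=> uk; rewrite submK //; apply/mnm_lepP => i; rewrite mnm1E; case: eqP => [<-|//]; exact: uk.
Qed.

Theorem lemma3p1 (K : fieldType) (S : pred nat) (m : nat) (a : 'I_m -> nat) :
  numerical_semigroup S -> multiplicity S m -> (2 <= m)%N ->
  apery_data S a ->
  same_ideal (in_ideal (@apery_binomials K m a)) (@apery_toric_ideal K m a) /\
  (forall le : rel 'X_{1..m},
     term_order le ->
     (forall u v : 'X_{1..m}, (xdeg v < xdeg u)%N -> le v u && (u != v)) ->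
     groebner_basis le (@apery_binomials K m a) (@apery_toric_ideal K m a) /\
     same_ideal (initial_ideal le (@apery_toric_ideal K m a))
                (in_ideal (@quad_monoms K m))).
Proof.
move=> ns mu m2 ap.
have m0 : (0 < m)%N by case: mu.
pose y : 'I_m := Ordinal m0.
have y0 : val y = 0%N by [].
have oy k : ordmod k 0 = y by apply: val_inj; rewrite /= mod0n.
have BJ : forall g, apery_binomials a g -> apery_toric_ideal a (g : {mpoly K[m]}).
  move=> g [i [j [i0 ij ->]]]; rewrite oy.
  apply: (@bin_J K S m a y ns mu ap y0 i j); rewrite -lt0n //; exact: leq_trans i0 ij.
have std_red : forall p : {mpoly K[m]}, exists q : {mpoly K[m]},
    (forall v, (1 < xdeg v)%N -> q@_v = 0) /\ in_ideal (apery_binomials a) (p - q).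
  move=> p; rewrite {1}(mpolyE p); elim: (msupp p) => [|u s [q [hq hI]]].
    exists 0; split; first by move=> v _; rewrite mcoeff0.
    by rewrite big_nil subrr; apply: ii0.
  have [w [hw hIw]] := @reduce K m a y y0 _ u (erefl (mdeg u)).
  exists (p@_u *: 'X_[w] + q); split.
    move=> v hv; rewrite mcoeffD mcoeffZ mcoeffX hq //; case: eqP => [e|_].
      by move: hv; rewrite -e ltnNge hw.
    by rewrite mulr0 addr0.
  rewrite big_cons.
  set T := \sum_(_ <- _) _.
  have -> : p@_u *: 'X_[u] + T - (p@_u *: 'X_[w] + q) =
      (p@_u)%:MP * ('X_[u] - 'X_[w]) + (T - q).
    by rewrite -!mul_mpolyC; ring.
  by apply: iiD => //; apply: iiM.
split.
  move=> p; split; first exact: iiJ.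
  move=> hJ; have [q [hq hI]] := std_red p.
  have Jq : apery_toric_ideal a q.
    have := iiJ BJ hI; move: hJ; rewrite /apery_toric_ideal => hJ.
    by rewrite rmorphB /= hJ sub0r => /eqP; rewrite oppr_eq0 => /eqP.
  by move: hI; rewrite (std_zero mu ap y0 hq Jq) subr0.
move=> le [[refl anti trans tot] [_ _]] hle.
have QB : forall g, quad_monoms g ->
    in_ideal (lead_monoms le (@apery_binomials K m a)) g.
  move=> g [i [j [i0 j0 ->]]]; apply: iigen.
  have i0' : val i != 0%N by rewrite -lt0n.
  have j0' : val j != 0%N by rewrite -lt0n.
  have nz (b : {mpoly K[m]}) u : is_lead_monom le b u -> b != 0.
    by case=> uin _; apply/eqP => b0; move: uin; rewrite b0 mcoeff_msupp mcoeff0 eqxx.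
  case: (leqP i j) => ij.
    have hl := @lead_bin K m le y i j (oadd i j) (cij a i j) y0 i0' j0' refl hle.
    exists ('X_i * 'X_j - 'X_y ^+ cij a i j * 'X_(oadd i j)), (U_(i) + U_(j))%MM.
    split; [|exact: nz hl|exact: hl|by rewrite mpolyXD].
    by exists i, j; split; rewrite ?oy.
  have hl := @lead_bin K m le y j i (oadd j i) (cij a j i) y0 j0' i0' refl hle.
  exists ('X_j * 'X_i - 'X_y ^+ cij a j i * 'X_(oadd j i)), (U_(j) + U_(i))%MM.
  split; [|exact: nz hl|exact: hl|by rewrite mpolyXD mulrC].
  by exists j, i; split; rewrite ?oy // ltnW.
have LJQ : forall g, lead_monoms le (@apery_toric_ideal K m a) g ->
    in_ideal (@quad_monoms K m) g.
  move=> g [f [u [Jf f0 [uin ule] ->]]].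
  have x2 : (1 < xdeg u)%N.
    rewrite ltnNge; apply/negP => xu; move/eqP: f0; apply.
    apply: (std_zero mu ap y0 _ Jf) => v xv.
    apply/eqP; apply: contraT; rewrite -mcoeff_msupp => vin; exfalso.
    have /andP[luv vu] := hle v u (leq_ltn_trans xu xv).
    by move/negP: vu; apply; apply/eqP; apply: anti; rewrite luv ule.
  have [k [k0 uk]] := pick_nz (ltnW x2).
  have eu := split_U uk.
  have x1 : (0 < xdeg (u - U_(k)))%N.
    by move: x2; rewrite {1}eu xdegD xdegU k0 addn1 ltnS.
  have [j [j0 uj]] := pick_nz x1.
  have eu' := split_U uj.
  rewrite eu eu' !mpolyXD -mulrA; apply: iiM; apply: iigen.
  by exists j, k; split; rewrite ?lt0n.
have LBLJ : forall g, lead_monoms le (@apery_binomials K m a) g ->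
    lead_monoms le (@apery_toric_ideal K m a) g.
  by move=> g [f [u [Bf f0 hl ->]]]; exists f, u; split => //; apply: BJ.
split.
  split; first exact: BJ.
  move=> p; split.
    by apply: iisub => g /LJQ; apply: iisub.
  exact: iimono.
move=> p; split; first exact: iisub.
by apply: iisub => g /QB; apply: iimono.
Qed.
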